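(* Let $s\ge1$ and $n_1\ge n_2\ge\dots\ge n_s>0$ be integers. Let $\mathfrak g$ be the complex vector space with basis $e_0,f_0,e^i_j,f^i_j$ ($i=1,\dots,s$, $j=1,\dots,n_i$), set $e^i_0=e_0$, $f^i_0=f_0$ for all $i$, and define a bracket by $[e^i_j,f^i_k]=e^i_{j-k}$ for $0\le k\le j\le n_i$, all other brackets of basis elements (not determined by these relations and antisymmetry) being zero. Then $\mathfrak g$ is a Lie algebra, and its Jordan–Kronecker invariants consist of the single Jordan tuple $J_\lambda(2n_1+2,2n_2,\dots,2n_s)$ (and no Kronecker blocks).
   Context: For a finite-dimensional complex Lie algebra $\mathfrak g$ and $x\in\mathfrak g^*$, let $\mathcal A_x$ be the skew form $(\xi,\eta)\mapsto\langle x,[\xi,\eta]\rangle$. By the Jordan–Kronecker theorem, a pair of skew forms on a finite-dimensional complex vector space admits a basis in which both are block-diagonal with blocks of types: Jordan $2n\times2n$ blocks with eigenvalue $\mu\in\mathbb C\cup\{\infty\}$ ($A_i=\begin{pmatrix}0&J_\mu\\-J_\mu^T&0\end{pmatrix}$, $B_i=\begin{pmatrix}0&I_n\\-I_n&0\end{pmatrix}$), and Kronecker $(2k-1)\times(2k-1)$ blocks; block data grouped by eigenvalue are unique. The JK invariants of $\mathfrak g$ are the Kronecker sizes and Jordan tuples $J_{\lambda_i}(2n_{i1},\dots,2n_{is_i})$ (sizes of Jordan blocks with a common eigenvalue $\lambda_i$, in decreasing order) of $(\mathcal A_x,\mathcal A_a)$ for $(x,a)$ in a nonempty Zariski open subset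 of $\mathfrak g^*\times\mathfrak g^*$ where these are constant. *)

(* Defs.v *)
(* C is modelled as  R[i] = complex R  for an arbitrary
   R : realType (every realType is isomorphic to the reals). *)
From HB Require Import structures.
From mathcomp Require Import all_boot all_order all_algebra.
From mathcomp Require Import reals complex.
From mathcomp Require Import mpoly.
Set Implicit Arguments. Unset Strict Implicit. Unset Printing Implicit Defensive.
Import GRing.Theory Num.Theory.
Local Open Scope ring_scope.

(* Jor (Some mu) n : Jordan 2n x 2n block with eigenvalue mu;
   Jor None n      : Jordan 2n x 2n block with eigenvalue infinity;
   Kro k           : Kronecker (2k+1) x (2k+1) block (k >= 0). *)
Inductive jkblock (F : Type) := Jor of option F & nat | Kro of nat.

Section JK.
Variable F : fieldType.

Definition bsize (b : jkblock F) : nat :=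
  match b with Jor _ n => n + n | Kro k => k + k.+1 end.

Definition jblk (mu : F) (n : nat) : 'M[F]_n :=
  \matrix_(i, j) (if (i == j :> nat) then mu
                  else if (j == i.+1 :> nat) then 1 else 0).

Definition pairblk m k (M : 'M[F]_(m, k)) : 'M[F]_(m + k) :=
  block_mx 0 M (- M^T) 0.

Definition kro1 k : 'M[F]_(k, k.+1) := \matrix_(i, j) (i == j :> nat)%:R.
Definition kro2 k : 'M[F]_(k, k.+1) := \matrix_(i, j) (j == i.+1 :> nat)%:R.

Definition blockA (b : jkblock F) : 'M[F]_(bsize b) :=
  match b return 'M[F]_(bsize b) with
  | Jor (Some mu) n => pairblk (jblk mu n)
  | Jor None n => pairblk (1%:M : 'M[F]_n)
  | Kro k => pairblk (kro1 k)
  end.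

Definition blockB (b : jkblock F) : 'M[F]_(bsize b) :=
  match b return 'M[F]_(bsize b) with
  | Jor (Some mu) n => pairblk (1%:M : 'M[F]_n)
  | Jor None n => pairblk (jblk 0 n)
  | Kro k => pairblk (kro2 k)
  end.

Fixpoint jk_dim (s : seq (jkblock F)) : nat :=
  if s is b :: s' then bsize b + jk_dim s' else 0.

Fixpoint jkA (s : seq (jkblock F)) : 'M[F]_(jk_dim s) :=
  match s return 'M[F]_(jk_dim s) with
  | [::] => 0
  | b :: s' => block_mx (blockA b) 0 0 (jkA s')
  end.

Fixpoint jkB (s : seq (jkblock F)) : 'M[F]_(jk_dim s) :=
  match s return 'M[F]_(jk_dim s) with
  | [::] => 0
  | b :: s' => block_mx (blockB b) 0 0 (jkB s')
  end.

(* The pair of skew forms with Gram matrices (A, B) has JK decomposition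
   given by the block list s: in some basis (rows of the invertible P)
   both forms are simultaneously block diagonal with these blocks.
   (By uniqueness of the JK decomposition, this determines the JK data.) *)
Definition has_JK_form N (A B : 'M[F]_N) (s : seq (jkblock F)) : Prop :=
  exists e : jk_dim s = N, exists P : 'M[F]_N,
    [/\ P \in unitmx,
        P *m A *m P^T = castmx (e, e) (jkA s) &
        P *m B *m P^T = castmx (e, e) (jkB s)].

(* The single Jordan tuple  J_lam(2 n_1 + 2, 2 n_2, ..., 2 n_s). *)
Definition target_tuple (lam : option F) (ns : seq nat) : seq (jkblock F) :=
  match ns with
  | [::] => [::]
  | n1 :: rest => Jor lam n1.+1 :: map (Jor lam) rest
  end.

End JK.

(* ns = [:: n_1; ...; n_s], s = size ns.                              *)
(* Basis index type  bool * option {i : 'I_s & 'I_(n_i)} :            *)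
(*   (true,  None)          = e_0        (false, None)          = f_0 *)
(*   (true,  Some (i; j))   = e^i_{j+1}  (false, Some (i; j))   = f^i_{j+1} *)

Section Algebra.
Variable ns : seq nat.

Definition nn (i : 'I_(size ns)) : nat := nth 0%N ns i.
Definition lvlT := option {i : 'I_(size ns) & 'I_(nn i)}.
Definition gidx := (bool * lvlT)%type.

Definition lvl (u : lvlT) : nat :=
  if u is Some t then (tagged t).+1 else 0%N.

Definition onchain (i : 'I_(size ns)) (u : lvlT) : bool :=
  if u is Some t then tag t == i else true.

(* [e_u, f_v] has coefficient 1 on e_w:  e^i_j, f^i_k, 0 <= k <= j,
   and w = e^i_{j-k}. *)
Definition econd (u v w : lvlT) : bool :=
  [exists i, [&& onchain i u, onchain i v & onchain i w]] &&
  (lvl v <= lvl u)%N && (lvl w == lvl u - lvl v)%N.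

Variable F : fieldType.

(* structure constants: [b_p, b_q] = \sum_r cst p q r b_r *)
Definition cst (p q r : gidx) : F :=
  match p, q with
  | (true, u), (false, v) => if r.1 && econd u v r.2 then 1 else 0
  | (false, v), (true, u) => if r.1 && econd u v r.2 then -1 else 0
  | _, _ => 0
  end.

Definition lie_br (X Y : {ffun gidx -> F}) : {ffun gidx -> F} :=
  [ffun r => \sum_p \sum_q X p * Y q * cst p q r].

(* Gram matrix of A_x : (xi, eta) |-> <x, [xi, eta]> in the basis
   (b_p) enumerated by enum_val;  x given by its coordinates in the dual
   basis. *)
Definition Aform (x : {ffun gidx -> F}) : 'M[F]_#|{: gidx}| :=
  \matrix_(p, q) \sum_r x r * cst (enum_val p) (enum_val q) r.

(* the point (x, a) of g^* x g^* = F^(N + N) *)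
Definition gpt (x a : {ffun gidx -> F}) : 'I_(#|{: gidx}| + #|{: gidx}|) -> F :=
  fun k => match split k with
           | inl p => x (enum_val p)
           | inr q => a (enum_val q)
           end.

End Algebra.

(* Zariski open subsets of F^m : complements of common zero sets of a
   set S of polynomials, i.e. sets of the form {z | exists f in S, f(z) <> 0}. *)
Definition zariski_open (F : fieldType) (m : nat) (U : ('I_m -> F) -> Prop) :=
  exists S : {mpoly F[m]} -> bool,
    forall z, U z <-> exists f, S f /\ mpoly.meval z f != 0.

(* Main.v *)
Require Import Defs.
From HB Require Import structures.
From mathcomp Require Import all_boot all_order all_algebra.
From mathcomp Require Import reals complex.
From mathcomp Require Import mpoly.
From mathcomp Require Import ring zify.
Set Implicit Arguments. Unset Strict Implicit. Unset Printing Implicit Defensive.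
Import GRing.Theory Num.Theory.
Local Open Scope ring_scope.


Section Comb.
Variables (n1 : nat) (rest : seq nat).
Local Notation ns := (n1 :: rest).
Local Notation T := (lvlT ns).
Local Notation I := ('I_(size ns)).

Definition at_ (i : I) (d : nat) : T :=
  if d is d'.+1 then
    match (insub d' : option 'I_(nn i)) with
    | Some k => Some (Tagged (fun j : I => 'I_(nn j)) k)
    | None => None end
  else None.

Definition chainof (u : T) : I := if u is Some t then tag t else ord0.

Lemma at0 i : at_ i 0 = None. Proof. by []. Qed.

Lemma lvl_at i d : (d <= nn i)%N -> lvl (at_ i d) = d.
Proof. case: d => [|d] //= hd. by rewrite insubT. Qed.

Lemma onchain_at i d : onchain i (at_ i d).
Proof. case: d => [|d] //=. by case: insubP => //= k _ _ /=. Qed.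

Lemma lvl0 (u : T) : (lvl u == 0%N) = (u == None). Proof. by case: u. Qed.

Lemma at_cover (u : T) : at_ (chainof u) (lvl u) = u.
Proof. case: u => [[i k]|] //=. by rewrite valK. Qed.

Lemma lvl_le (u : T) : (lvl u <= nn (chainof u))%N.
Proof. by case: u => [[i k]|] //=. Qed.

Lemma onchain_chainof (u : T) i : onchain i u -> (lvl u == 0%N) || (chainof u == i).
Proof. by case: u => [[i' k]|] //=. Qed.

Lemma at_eq i j (v : T) : (j <= nn i)%N -> (v == at_ i j) = onchain i v && (lvl v == j).
Proof.
move=> hj; apply/eqP/andP => [->|[hv /eqP hl]]; first by rewrite onchain_at lvl_at.
case: v hv hl => [[i' k]|] /= hv hl; last by rewrite -hl.
move/eqP: hv => hv; subst i' j => /=. by rewrite valK.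
Qed.

Lemma existsP_eq (i : I) (P : pred I) : [exists i0, (i == i0) && P i0] = P i.
Proof.
apply/existsP/idP => [[i0 /andP[/eqP <- //]]|h]; by exists i; rewrite eqxx.
Qed.

Lemma econd_at i d (v w : T) : (d <= nn i)%N ->
  econd (at_ i d) v w = [&& onchain i v, onchain i w, (lvl v <= d)%N & lvl w == d - lvl v]%N.
Proof.
move=> hd; rewrite /econd lvl_at //.
case: d hd => [|d] hd.
  rewrite at0 /=.
  case: v => [[iv kv]|]; case: w => [[iw kw]|] //=; rewrite ?andbF ?andbT //.
  by apply/existsP; exists ord0.
have [t0 [ht0 htag]] : exists t0, at_ i d.+1 = Some t0 /\ tag t0 = i.
  by rewrite /= insubT //=; eexists; split.
rewrite ht0 /=.
have -> : [exists i0, [&& tag t0 == i0, onchain i0 v & onchain i0 w]] = onchain i v && onchain i w.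
  by rewrite htag; apply: (existsP_eq i (fun i0 => onchain i0 v && onchain i0 w)).
by rewrite -!andbA.
Qed.

Section Alg.
Variable F : fieldType.

Lemma sum_ord_eq (k n : nat) : \sum_(j < n) ((k == j)%:R : F) = ((k < n)%N)%:R.
Proof.
case: (ltnP k n) => h.
  rewrite (bigD1 (Ordinal h)) //= eqxx big1 ?addr0 // => j hj.
  by rewrite eq_sym; move: hj; rewrite -val_eqE /= => /negbTE ->.
by rewrite big1 // => j _; rewrite gtn_eqF // (leq_trans (ltn_ord j) h).
Qed.

Definition amul (a b : {ffun T -> F}) : {ffun T -> F} :=
  [ffun u => \sum_v \sum_w a v * b w * (econd u v w)%:R].
Definition aone : {ffun T -> F} := [ffun u => (u == None)%:R].

Lemma CF a b i d : (d <= nn i)%N ->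
  amul a b (at_ i d) = \sum_(j < d.+1) a (at_ i j) * b (at_ i (d - j)).
Proof.
move=> hd; rewrite ffunE.
transitivity (\sum_v (if onchain i v && (lvl v <= d)%N then a v * b (at_ i (d - lvl v)) else 0)).
  apply: eq_bigr => v _.
  under eq_bigr => w _ do rewrite econd_at //.
  case h: (onchain i v && (lvl v <= d)%N).
    move/andP: h => [h1 h2]; rewrite h1 h2 /=.
    have hle : (d - lvl v <= nn i)%N by rewrite (leq_trans (leq_subr _ _) hd).
    under eq_bigr => w _ do rewrite -(@at_eq i (d - lvl v) w hle).
    rewrite (bigD1 (at_ i (d - lvl v))) //= eqxx mulr1 big1 ?addr0 // => w /negbTE ->.
    by rewrite mulr0.
  rewrite big1 // => w _.
  have -> : [&& onchain i v, onchain i w, (lvl v <= d)%N & lvl w == (d - lvl v)%N] = false.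
    by apply/negbTE; apply/contraFN: h => /and4P[-> _ -> _].
  by rewrite mulr0.
symmetry.
transitivity (\sum_(j < d.+1) \sum_v (v == at_ i j)%:R * (a v * b (at_ i (d - lvl v)))).
  apply: eq_bigr => j _.
  have hj : (j <= nn i)%N by rewrite (leq_trans _ hd) // -ltnS.
  rewrite (bigD1 (at_ i j)) //= eqxx mul1r big1 ?addr0; first by rewrite lvl_at.
  by move=> v /negbTE ->; rewrite mul0r.
rewrite exchange_big /=; apply: eq_bigr => v _; rewrite -big_distrl /=.
under eq_bigr => j _ do rewrite (@at_eq i j v (leq_trans (ltn_ord j : (j <= d)%N) hd)).
case hv: (onchain i v) => /=; last by rewrite big1 ?mul0r // => j _.
by rewrite sum_ord_eq ltnS; case: ifP; rewrite ?mul1r ?mul0r.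
Qed.

Definition Pp i (a : {ffun T -> F}) : {poly F} := \poly_(d < (nn i).+1) a (at_ i d).

Lemma coefPp i a d : (d <= nn i)%N -> (Pp i a)`_d = a (at_ i d).
Proof. by rewrite coef_poly ltnS => ->. Qed.

Lemma CFP a b i d : (d <= nn i)%N -> amul a b (at_ i d) = (Pp i a * Pp i b)`_d.
Proof.
move=> hd; rewrite CF // coefM; apply: eq_bigr => j _.
have hj : (j <= d)%N := ltn_ord j.
by rewrite !coefPp // (leq_trans _ hd) // leq_subr.
Qed.

Lemma ext (a b : {ffun T -> F}) :
  (forall i d, (d <= nn i)%N -> a (at_ i d) = b (at_ i d)) -> a = b.
Proof. move=> h; apply/ffunP => u; rewrite -(at_cover u); apply: h; exact: lvl_le. Qed.

Lemma coefM_eql (p p' q : {poly F}) d :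
  (forall j, (j <= d)%N -> p`_j = p'`_j) -> (p * q)`_d = (p' * q)`_d.
Proof. by move=> h; rewrite !coefM; apply: eq_bigr => j _; rewrite h // -ltnS. Qed.

Lemma coefM_eqr (p q q' : {poly F}) d :
  (forall j, (j <= d)%N -> q`_j = q'`_j) -> (p * q)`_d = (p * q')`_d.
Proof. by move=> h; rewrite !coefM; apply: eq_bigr => j _; rewrite h // leq_subr. Qed.

Lemma amulA : associative amul.
Proof.
move=> a b c; apply: ext => i d hd; rewrite !CFP //.
rewrite (@coefM_eqr _ _ (Pp i b * Pp i c)); last first.
  by move=> j hj; have hj2 := leq_trans hj hd; rewrite coefPp //; exact: CFP.
rewrite [RHS](@coefM_eql _ (Pp i a * Pp i b)); last first.
  by move=> j hj; have hj2 := leq_trans hj hd; rewrite coefPp //; exact: CFP.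
by rewrite mulrA.
Qed.

Lemma amulC : commutative amul.
Proof. by move=> a b; apply: ext => i d hd; rewrite !CFP // mulrC. Qed.

Lemma Pp_one i : Pp i aone = 1.
Proof.
apply/polyP => d; rewrite coef_poly coef1.
case: ltnP => h; first by rewrite ffunE -lvl0 lvl_at.
by case: d h.
Qed.

Lemma amul1 : left_id aone amul.
Proof. by move=> a; apply: ext => i d hd; rewrite CFP // Pp_one mul1r coefPp. Qed.

Lemma ffunDE (f g : {ffun T -> F}) x : (f + g) x = f x + g x.
Proof. by rewrite ffunE. Qed.

Lemma PpD i a b : Pp i (a + b) = Pp i a + Pp i b.
Proof. by apply/polyP => d; rewrite coefD !coef_poly; case: ifP; rewrite ?ffunDE ?addr0. Qed.

Lemma amulDl : left_distributive amul +%R.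
Proof.
move=> a b c; apply: ext => i d hd.
by rewrite ffunDE !CFP // PpD mulrDl coefD.
Qed.

Lemma aone_neq0 : aone != 0.
Proof.
apply/eqP => /ffunP /(_ None); rewrite !ffunE eqxx => /eqP; by rewrite oner_eq0.
Qed.

Definition Alg := {ffun T -> F}.
HB.instance Definition _ := GRing.Zmodule.on Alg.
HB.instance Definition _ := GRing.Zmodule_isComNzRing.Build Alg amulA amulC amul1 amulDl aone_neq0.

Lemma mulE (a b : Alg) i d : (d <= nn i)%N ->
  (a * b) (at_ i d) = \sum_(j < d.+1) a (at_ i j) * b (at_ i (d - j)).
Proof. exact: CF. Qed.

End Alg.
End Comb.


Section Lie.
Variables (n1 : nat) (rest : seq nat).
Local Notation ns := (n1 :: rest).
Local Notation T := (lvlT ns).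
Local Notation G := (gidx ns).
Variable F : fieldType.

Definition eE (X : {ffun G -> F}) : {ffun T -> F} := [ffun u => X (true, u)].
Definition eF (X : {ffun G -> F}) : {ffun T -> F} := [ffun u => X (false, u)].

Lemma eEv (X : {ffun G -> F}) u : eE X u = X (true, u). Proof. exact: ffunE. Qed.
Lemma eFv (X : {ffun G -> F}) u : eF X u = X (false, u). Proof. exact: ffunE. Qed.

Lemma ffunBE (f g : {ffun T -> F}) x : (f - g) x = f x - g x.
Proof. by rewrite !ffunE. Qed.

Definition act (b phi : {ffun T -> F}) : {ffun T -> F} :=
  [ffun w => \sum_u \sum_v phi u * b v * (econd u v w)%:R].

Lemma sum_gidx (f : G -> F) : \sum_p f p = \sum_u f (true, u) + \sum_u f (false, u).
Proof.
rewrite (eq_bigr (fun p => f (p.1, p.2))); last by case.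
by rewrite -(pair_bigA _ (fun b u => f (b, u))) big_bool.
Qed.

Lemma lieE (X Y : {ffun G -> F}) b w :
  lie_br X Y (b, w) = if b then act (eF Y) (eE X) w - act (eF X) (eE Y) w else 0.
Proof.
rewrite ffunE sum_gidx.
case: b.
  rewrite !ffunE.
  have -> : \sum_u \sum_q X (true, u) * Y q * cst F (true, u) q (true, w) =
            \sum_u \sum_v eE X u * eF Y v * (econd u v w)%:R.
    apply: eq_bigr => u _; rewrite sum_gidx big1 ?add0r.
      by apply eq_bigr => v _; rewrite !ffunE /cst /=; case: econd.
    by move=> v _; rewrite /cst /= mulr0.
  have -> : \sum_u \sum_q X (false, u) * Y q * cst F (false, u) q (true, w) =
            - \sum_u \sum_v eE Y u * eF X v * (econd u v w)%:R.
    transitivity (\sum_u \sum_v X (false, u) * Y (true, v) * - (econd v u w)%:R).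
      apply: eq_bigr => u _; rewrite sum_gidx [X in _ + X]big1 ?addr0; last first.
        by move=> v _; rewrite /cst /= mulr0.
      by apply: eq_bigr => v _; rewrite /cst /=; case: econd; rewrite ?oppr0.
    rewrite exchange_big -sumrN; apply: eq_bigr => v _; rewrite -sumrN.
    apply: eq_bigr => u _; rewrite !ffunE mulrN; congr (- _); congr (_ * _).
    by rewrite mulrC.
  by [].
rewrite !big1 ?addr0 // => u _; rewrite big1 // => q _;
  by case: q => [[] v]; rewrite /cst /= ?mulr0.
Qed.


Local Notation Alg := (Alg n1 rest F).
Definition delta (w : T) : Alg := [ffun u => (u == w)%:R].

Lemma mul_val (b g : Alg) u : (b * g) u = \sum_v \sum_w b v * g w * (econd u v w)%:R.
Proof. by rewrite ffunE. Qed.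

Lemma sum_delta (f : T -> F) w : \sum_u (u == w)%:R * f u = f w.
Proof.
rewrite (bigD1 w) //= eqxx mul1r big1 ?addr0 // => u /negbTE ->; by rewrite mul0r.
Qed.

Lemma act_delta (b : Alg) phi w : act b phi w = \sum_u phi u * (b * delta w) u.
Proof.
rewrite ffunE; apply: eq_bigr => u _; rewrite mul_val mulr_sumr; apply: eq_bigr => v _.
rewrite (bigD1 w) //= !ffunE eqxx mulr1 big1 ?addr0 ?mulrA // => w' /negbTE hw.
by rewrite ffunE hw mulr0 mul0r.
Qed.

Lemma mul_decomp (b g : Alg) u : (b * g) u = \sum_w (b * delta w) u * g w.
Proof.
rewrite mul_val exchange_big /=; apply: eq_bigr => w _.
rewrite mul_val mulr_suml; apply: eq_bigr => v _.
rewrite (bigD1 w) //= !ffunE eqxx mulr1 big1 ?addr0.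
  by rewrite -!mulrA [g w * _]mulrC.
by move=> w' /negbTE hw; rewrite ffunE hw !mulr0 mul0r.
Qed.

Lemma actM (a b : Alg) phi w : act a (act b phi) w = \sum_u phi u * (b * (a * delta w)) u.
Proof.
rewrite act_delta.
under eq_bigr => u _ do rewrite act_delta mulr_suml.
rewrite exchange_big /=; apply: eq_bigr => u' _.
rewrite mul_decomp mulr_sumr; apply: eq_bigr => u _.
by rewrite mulrA.
Qed.

Lemma act_comm (a b : Alg) phi : act a (act b phi) = act b (act a phi).
Proof. by apply/ffunP => w; rewrite !actM mulrCA. Qed.

Lemma act0 phi w : act 0 phi w = 0.
Proof. by rewrite ffunE big1 // => u _; rewrite big1 // => v _; rewrite ffunE mulr0 mul0r. Qed.

Lemma actB b phi psi w : act b (phi - psi) w = act b phi w - act b psi w.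
Proof.
rewrite !ffunE -sumrB; apply: eq_bigr => u _; rewrite -sumrB; apply: eq_bigr => v _.
by rewrite !ffunE !mulrBl.
Qed.

Lemma lieT (X Y Z : {ffun G -> F}) w :
  lie_br X (lie_br Y Z) (true, w) =
  - (act (eF X) (act (eF Z) (eE Y)) w - act (eF X) (act (eF Y) (eE Z)) w).
Proof.
rewrite lieE.
have -> : eF (lie_br Y Z) = 0 by apply/ffunP => u; rewrite eFv lieE ffunE.
have -> : eE (lie_br Y Z) = act (eF Z) (eE Y) - act (eF Y) (eE Z).
  by apply/ffunP => u; rewrite eEv lieE ffunBE.
by rewrite act0 actB add0r.
Qed.

Lemma gffunDE (f g : {ffun G -> F}) x : (f + g) x = f x + g x.
Proof. by rewrite ffunE. Qed.

Lemma lie_alt (X : {ffun G -> F}) : lie_br X X = 0.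
Proof. by apply/ffunP => [[b w]]; rewrite lieE [RHS]ffunE; case: b; rewrite ?subrr. Qed.

Lemma lie_jacobi (X Y Z : {ffun G -> F}) :
  lie_br X (lie_br Y Z) + lie_br Y (lie_br Z X) + lie_br Z (lie_br X Y) = 0.
Proof.
apply/ffunP => [[b w]]; rewrite !gffunDE [RHS]ffunE; case: b.
  rewrite !lieT (act_comm (eF X) (eF Z)) (act_comm (eF X) (eF Y)) (act_comm (eF Y) (eF Z)).
  ring.
by rewrite !lieE !addr0.
Qed.

End Lie.


Section Mat.
Variable F : fieldType.
Variable N : nat.

Definition bf (M : 'M[F]_N) (u v : 'rV[F]_N) : F := (u *m M *m v^T) 0 0.

Lemma entry m1 m2 (U : 'M[F]_(m1, N)) (V : 'M_(m2, N)) M k l :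
  (U *m M *m V^T) k l = bf M (row k U) (row l V).
Proof.
rewrite /bf !mxE; apply: eq_bigr => c _; rewrite !mxE; congr (_ * _).
by apply: eq_bigr => d _; rewrite !mxE.
Qed.

Lemma bf_skew M u v : M^T = - M -> bf M v u = - bf M u v.
Proof.
move=> hM; rewrite /bf.
have -> : (v *m M *m u^T) 0 0 = ((v *m M *m u^T)^T) 0 0 by rewrite [RHS]mxE.
by rewrite !trmx_mul trmxK hM mulNmx mulmxN mulmxA mxE.
Qed.

Definition mk m (V : nat -> 'rV[F]_N) : 'M[F]_(m, N) := \matrix_(p < m, c < N) V p 0 c.

Lemma row_mk m V (k : 'I_m) : row k (mk m V) = V k.
Proof. by apply/rowP => c; rewrite !mxE. Qed.

Lemma mk_bf m1 m2 (V1 V2 : nat -> 'rV[F]_N) M (f : 'I_m1 -> 'I_m2 -> F) :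
  (forall (p : 'I_m1) (q : 'I_m2), bf M (V1 p) (V2 q) = f p q) ->
  mk m1 V1 *m M *m (mk m2 V2)^T = \matrix_(p, q) f p q.
Proof. by move=> h; apply/matrixP => k l; rewrite entry !row_mk mxE h. Qed.

Lemma zero_bf m1 m2 (X : 'M_(m1, N)) (Y : 'M_(m2, N)) M :
  (forall k l, bf M (row k X) (row l Y) = 0) -> X *m M *m Y^T = 0.
Proof. by move=> h; apply/matrixP => k l; rewrite entry h mxE. Qed.

Lemma colmx_form m1 m2 (X : 'M[F]_(m1, N)) (Y : 'M_(m2, N)) M :
  col_mx X Y *m M *m (col_mx X Y)^T =
  block_mx (X *m M *m X^T) (X *m M *m Y^T) (Y *m M *m X^T) (Y *m M *m Y^T).
Proof. by rewrite tr_col_mx mul_col_mx mul_col_row. Qed.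

Definition jv (lam : F) (p q : nat) : F := if p == q then lam else if q == p.+1 then 1 else 0.

Definition RP m (P : 'M[F]_(m, N)) (ms : seq nat) (VE VF : nat -> nat -> 'rV[F]_N) :=
  forall k, exists j p, [/\ (j < size ms)%N, (p < nth 0%N ms j)%N &
                           (row k P = VE j p \/ row k P = VF j p)].

Lemma build (A B : 'M[F]_N) (lam : F) (ms : seq nat) (VE VF : nat -> nat -> 'rV[F]_N) :
  A^T = - A -> B^T = - B ->
  (forall j j' p q, (j < size ms)%N -> (j' < size ms)%N ->
     (p < nth 0%N ms j)%N -> (q < nth 0%N ms j')%N ->
     [/\ bf A (VE j p) (VE j' q) = 0, bf A (VF j p) (VF j' q) = 0,
         bf B (VE j p) (VE j' q) = 0, bf B (VF j p) (VF j' q) = 0 &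
         (bf A (VE j p) (VF j' q) = (if j == j' then jv lam p q else 0) /\
         bf B (VE j p) (VF j' q) = (if (j == j') && (p == q) then 1 else 0))]) ->
  exists P : 'M[F]_(jk_dim (map (Jor (Some lam)) ms), N),
    [/\ P *m A *m P^T = jkA (map (Jor (Some lam)) ms),
        P *m B *m P^T = jkB (map (Jor (Some lam)) ms) & RP P ms VE VF].
Proof.
move=> hA hB; elim: ms VE VF => [|m ms IH] VE VF h.
  by exists 0; split; [apply/matrixP => [[]]|apply/matrixP => [[]]|case].
have [P' [hPA hPB hRP]] := IH (fun j => VE j.+1) (fun j => VF j.+1)
   (fun j j' p q hj hj' hp hq => h j.+1 j'.+1 p q hj hj' hp hq).
pose PE := mk m (VE 0%N); pose PF := mk m (VF 0%N).
exists (col_mx (col_mx PE PF) P').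
have vzero (M : 'M[F]_N) j j' p q u v : (M = A \/ M = B) ->
    (j < size (m :: ms))%N -> (j' < size (m :: ms))%N ->
    (p < nth 0%N (m :: ms) j)%N -> (q < nth 0%N (m :: ms) j')%N -> j != j' ->
    (u = VE j p \/ u = VF j p) -> (v = VE j' q \/ v = VF j' q) -> bf M u v = 0.
  move=> hM hj hj' hp hq hne hu hv.
  have [h1 h2 h3 h4 [h5 h6]] := h j j' p q hj hj' hp hq.
  have [g1 g2 g3 g4 [g5 g6]] := h j' j q p hj' hj hq hp.
  rewrite (negbTE hne) in h5 h6; rewrite eq_sym (negbTE hne) in g5 g6.
  case: hM => ->; case: hu => ->; case: hv => -> //.
    by rewrite bf_skew // g5 oppr0.
  by rewrite bf_skew // g6 oppr0.
have rowsP0 k : exists p, (p < m)%N /\ (row k (col_mx PE PF) = VE 0%N p \/ row k (col_mx PE PF) = VF 0%N p).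
  case: (split_ordP k) => k' ->.
    by exists k'; split => //; left; rewrite rowKu row_mk.
  by exists k'; split => //; right; rewrite rowKd row_mk.
have cross (M : 'M[F]_N) : (M = A \/ M = B) ->
   col_mx PE PF *m M *m P'^T = 0 /\ P' *m M *m (col_mx PE PF)^T = 0.
  move=> hM; split; apply: zero_bf => k l.
    have [p [hp hk]] := rowsP0 k; have [j [q [hj hq hl]]] := hRP l.
    exact: (vzero M 0%N j.+1 p q).
  have [p [hp hk]] := rowsP0 l; have [j [q [hj hq hl]]] := hRP k.
  exact: (vzero M j.+1 0%N q p).
have eEE (M : 'M[F]_N) : M = A \/ M = B -> PE *m M *m PE^T = 0.
  move=> hM; apply/matrixP => k l; rewrite entry !row_mk mxE.
  have [h1 h2 h3 h4 [h5 h6]] := h 0%N 0%N k l isT isT (ltn_ord k) (ltn_ord l).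
  by case: hM => ->.
have eFF (M : 'M[F]_N) : M = A \/ M = B -> PF *m M *m PF^T = 0.
  move=> hM; apply/matrixP => k l; rewrite entry !row_mk mxE.
  have [h1 h2 h3 h4 [h5 h6]] := h 0%N 0%N k l isT isT (ltn_ord k) (ltn_ord l).
  by case: hM => ->.
have eEFA : PE *m A *m PF^T = jblk lam m.
  apply/matrixP => k l; rewrite entry !row_mk !mxE.
  by have [h1 h2 h3 h4 [-> h6]] := h 0%N 0%N k l isT isT (ltn_ord k) (ltn_ord l).
have eFEA : PF *m A *m PE^T = - (jblk lam m)^T.
  apply/matrixP => k l; rewrite entry !row_mk !mxE bf_skew //.
  by have [h1 h2 h3 h4 [-> h6]] := h 0%N 0%N l k isT isT (ltn_ord l) (ltn_ord k).
have eEFB : PE *m B *m PF^T = 1%:M.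
  apply/matrixP => k l; rewrite entry !row_mk !mxE.
  have [h1 h2 h3 h4 [h5 ->]] := h 0%N 0%N k l isT isT (ltn_ord k) (ltn_ord l).
  by rewrite -val_eqE /=; case: eqP.
have eFEB : PF *m B *m PE^T = - (1%:M)^T.
  apply/matrixP => k l; rewrite entry !row_mk !mxE bf_skew //.
  have [h1 h2 h3 h4 [h5 ->]] := h 0%N 0%N l k isT isT (ltn_ord l) (ltn_ord k).
  by rewrite -val_eqE /=; case: eqP.
have [cA1 cA2] := cross A (or_introl erefl).
have [cB1 cB2] := cross B (or_intror erefl).
split.
- by rewrite colmx_form colmx_form cA1 cA2 hPA eEE ?eFF ?eEFA ?eFEA; [|left|left].
- by rewrite colmx_form colmx_form cB1 cB2 hPB eEE ?eFF ?eEFB ?eFEB; [|right|right].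
move=> k; case: (split_ordP k) => k' ->.
  rewrite rowKu; have [p [hp hk]] := rowsP0 k'.
  by exists 0%N, p.
rewrite rowKd; have [j [q [hj hq hl]]] := hRP k'.
by exists j.+1, q.
Qed.

End Mat.

Lemma jkB_sq (F : fieldType) (lam : F) ms :
  jkB (map (Jor (Some lam)) ms) *m jkB (map (Jor (Some lam)) ms) = - 1%:M.
Proof.
elim: ms => [|m ms IH]; first by apply/matrixP => [[]].
rewrite /= /pairblk !mulmx_block IH !mul0mx !mulmx0 !mul1mx !mulmx1 trmx1 !addr0 !add0r.
by rewrite [in RHS](scalar_mx_block (m + m) _ 1) opp_block_mx !oppr0 (scalar_mx_block m m 1) opp_block_mx !oppr0.

Qed.

Lemma cast_form (F : fieldType) n N (e : n = N) (P : 'M[F]_(n, N)) (A : 'M_N) :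
  castmx (e, erefl N) P *m A *m (castmx (e, erefl N) P)^T = castmx (e, e) (P *m A *m P^T).
Proof. by move: A P; case: N / e => A P; rewrite !castmx_id. Qed.

Lemma cast_unit (F : fieldType) n N (e : n = N) (J : 'M[F]_n) :
  J \in unitmx -> castmx (e, e) J \in unitmx.
Proof. by case: N / e; rewrite castmx_id. Qed.

Lemma build_JK (F : fieldType) (N : nat) (A B : 'M[F]_N) (lam : F) (ms : seq nat)
  (VE VF : nat -> nat -> 'rV[F]_N) :
  A^T = - A -> B^T = - B ->
  (forall j j' p q, (j < size ms)%N -> (j' < size ms)%N ->
     (p < nth 0%N ms j)%N -> (q < nth 0%N ms j')%N ->
     [/\ bf A (VE j p) (VE j' q) = 0, bf A (VF j p) (VF j' q) = 0,
         bf B (VE j p) (VE j' q) = 0, bf B (VF j p) (VF j' q) = 0 &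
         (bf A (VE j p) (VF j' q) = (if j == j' then jv lam p q else 0) /\
         bf B (VE j p) (VF j' q) = (if (j == j') && (p == q) then 1 else 0))]) ->
  jk_dim (map (Jor (Some lam)) ms) = N ->
  has_JK_form A B (map (Jor (Some lam)) ms).
Proof.
move=> hA hB h e.
have [P [hPA hPB _]] := build hA hB h.
exists e, (castmx (e, erefl N) P); rewrite !cast_form hPA hPB; split => //.
have: castmx (e, erefl N) P *m B *m (castmx (e, erefl N) P)^T \in unitmx.
  rewrite cast_form hPB; apply: cast_unit.
  have hJ := jkB_sq lam ms.
  have : jkB (map (Jor (Some lam)) ms) *m (- jkB (map (Jor (Some lam)) ms)) = 1%:M.
    by rewrite mulmxN hJ opprK.
  by case/mulmx1_unit.
by rewrite !unitmx_mul => /andP[/andP[]].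
Qed.


Section Val.
Variables (F : fieldType) (n1 : nat) (rest : seq nat).
Local Notation ns := (n1 :: rest).
Local Notation T := (lvlT ns).
Local Notation I := ('I_(size ns)).
Local Notation Alg := (Alg n1 rest F).

Lemma mul0v (a b : Alg) i : (a * b) (at_ i 0) = a None * b None.
Proof. by rewrite mulE // big_ord1. Qed.

Lemma mul_scal (c g : Alg) i d : (forall u, u != None -> c u = 0) -> (d <= nn i)%N ->
  (c * g) (at_ i d) = c None * g (at_ i d).
Proof.
move=> hc hd; rewrite mulE // big_ord_recl big1 ?addr0; first by rewrite subn0.
move=> j _; rewrite lift0 hc ?mul0r //; rewrite -lvl0 lvl_at //.
by rewrite (leq_trans _ hd) // (ltn_ord j).
Qed.

Definition vanish (a : Alg) i m := forall l, (l < m)%N -> (l <= nn i)%N -> a (at_ i l) = 0.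

Lemma VL1 (a b : Alg) i d m k : vanish a i m -> vanish b i k -> (d <= nn i)%N -> (d < m + k)%N ->
  (a * b) (at_ i d) = 0.
Proof.
move=> ha hb hd hdk; rewrite mulE // big1 // => j _.
have hj : (j <= d)%N := ltn_ord j.
case: (ltnP j m) => hjm; first by rewrite ha ?mul0r // (leq_trans hj hd).
rewrite hb ?mulr0 //; last by rewrite (leq_trans (leq_subr _ _) hd).
by rewrite ltn_subLR // (leq_trans hdk) // leq_add2r.
Qed.

Lemma vanish_mul (a b : Alg) i m k : vanish a i m -> vanish b i k -> vanish (a * b) i (m + k).
Proof. by move=> ha hb l hl hli; apply: (VL1 ha hb). Qed.

Lemma VL2 (a b : Alg) i m k : vanish a i m -> vanish b i k -> (m + k <= nn i)%N ->
  (a * b) (at_ i (m + k)) = a (at_ i m) * b (at_ i k).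
Proof.
move=> ha hb hd; rewrite mulE //.
have hm : (m < (m + k).+1)%N by rewrite ltnS leq_addr.
rewrite (bigD1 (Ordinal hm)) //= addKn big1 ?addr0 // => j hj.
have hj' : (j <= m + k)%N := ltn_ord j.
have hne : (j : nat) != m by move: hj; rewrite -val_eqE.
case: (ltngtP j m) hne => // hjm _.
  by rewrite ha ?mul0r // (leq_trans hj' hd).
rewrite hb ?mulr0 //; last by rewrite (leq_trans (leq_subr _ _) hd).
by rewrite ltn_subLR // ltn_add2r.
Qed.

Lemma vanish0 (a : Alg) i : vanish a i 0.
Proof. by []. Qed.

Lemma VPow (G : Alg) i n : G None = 0 ->
  vanish (G ^+ n) i n /\ ((n <= nn i)%N -> (G ^+ n) (at_ i n) = G (at_ i 1) ^+ n).
Proof.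
move=> hG0; have hv1 : vanish G i 1 by move=> l; rewrite ltnS leqn0 => /eqP -> _.
elim: n => [|n [IHv IHl]].
  by split => // _; rewrite expr0 expr0 ffunE.
split; first by rewrite exprS; apply: (vanish_mul hv1 IHv).
move=> hn; rewrite exprS -add1n VL2 // ?add1n // IHl ?exprS //.
exact: ltnW.
Qed.

Lemma powY0 (Y : Alg) i e : (Y ^+ e) (at_ i 0) = Y None ^+ e.
Proof. by elim: e => [|e IH]; rewrite ?expr0 ?ffunE // !exprS mul0v -IH. Qed.

End Val.

Section Chain.
Variables (F : fieldType) (n1 : nat) (rest : seq nat).
Local Notation ns := (n1 :: rest).
Local Notation T := (lvlT ns).
Local Notation I := ('I_(size ns)).
Local Notation Alg := (Alg n1 rest F).
Hypothesis hsorted : sorted geq ns.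
Hypothesis hpos : all (fun k => 0 < k)%N ns.

Lemma nn_le (j : I) : (nn j <= n1)%N.
Proof.
have hall : all (geq n1) rest.
  by apply: (order_path_min (leT := geq)) => // a b c hba hcb; exact: leq_trans hcb hba.
rewrite /nn; case: j => [[|j] hj] //=.
by apply: (allP hall); apply: mem_nth; rewrite -ltnS.
Qed.

Lemma nn_pos (j : I) : (0 < nn j)%N.
Proof. exact: (all_nthP 0%N hpos) j (ltn_ord j). Qed.

Lemma chainof_at (j : I) d : (0 < d)%N -> (d <= nn j)%N -> chainof (at_ j d) = j.
Proof. by case: d => // d _ hd /=; rewrite insubT. Qed.

Lemma algBE (a b : Alg) u : (a - b) u = a u - b u.
Proof. by rewrite !ffunE. Qed.

Lemma alg0E u : (0 : Alg) u = 0.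
Proof. by rewrite ffunE. Qed.

Variables (X Y : Alg).
Hypothesis hy0 : Y None != 0.

Definition lam := X None / Y None.
Definition Lam : Alg := [ffun u => (u == None)%:R * lam].
Definition W : Alg := X - Lam * Y.

Lemma LamE (g : Alg) u : (Lam * g) u = lam * g u.
Proof.
rewrite -(at_cover u) mul_scal ?lvl_le //; first by rewrite ffunE eqxx mul1r.
by move=> v hv; rewrite ffunE (negbTE hv) mul0r.
Qed.

Lemma W0 : W None = 0.
Proof. by rewrite algBE LamE /lam divfK // subrr. Qed.

Definition wc (i : I) : Alg :=
  [ffun u => if u is Some t then (if tag t == i then W u else 0) else 0].

Lemma wc_None i : wc i None = 0.
Proof. by rewrite ffunE. Qed.

Lemma wc_at i j d : (d <= nn j)%N ->
  wc i (at_ j d) = if (j == i) && (0 < d)%N then W (at_ j d) else 0.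
Proof.
case: d => [|d] hd; first by rewrite at0 wc_None andbF.
have [t [ht htag]] : exists t, at_ j d.+1 = Some t /\ tag t = j.
  by rewrite /= insubT //=; eexists; split.
by rewrite ht ffunE htag andbT.
Qed.

Lemma wc_off i j e n : j != i -> (0 < n)%N -> (e <= nn j)%N -> (wc i ^+ n) (at_ j e) = 0.
Proof.
move=> hji; case: n => // n _ he; rewrite exprS mulE // big1 // => l _.
rewrite wc_at ?(negbTE hji) ?mul0r //.
by rewrite (leq_trans _ he) // -ltnS (ltn_ord l).
Qed.

Lemma W_wc i n : (0 < n)%N -> W * wc i ^+ n = wc i ^+ n.+1.
Proof.
move=> hn; apply: ext => j d hd; rewrite exprS !mulE //; apply: eq_bigr => l _.
have hl : (l <= nn j)%N by rewrite (leq_trans _ hd) // -ltnS (ltn_ord l).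
case: (eqVneq j i) => [hji|hji]; last first.
  by rewrite wc_off ?mulr0 // (leq_trans (leq_subr _ _) hd).
subst j; rewrite wc_at // eqxx /=; case: ifP => // /negbT; rewrite -eqn0Ngt => /eqP hl0.
by rewrite hl0 at0 W0 !mul0r.
Qed.

Lemma wc_nil i : wc i ^+ (nn i).+1 = 0.
Proof.
apply: ext => j d hd; rewrite alg0E.
case: (eqVneq j i) => [hji|hji]; last by rewrite wc_off.
by subst j; have [hv _] := VPow i (nn i).+1 (wc_None i); rewrite hv.
Qed.

Lemma W_nil : W ^+ n1.+1 = 0.
Proof.
apply: ext => j d hd; rewrite alg0E.
have [hv _] := VPow j n1.+1 W0; rewrite hv //.
by rewrite ltnS (leq_trans hd) // nn_le.
Qed.

Definition Gc (j : I) : Alg := if j == ord0 then W else wc j.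

Lemma Gc_None j : Gc j None = 0.
Proof. by rewrite /Gc; case: ifP => _; [exact: W0 | exact: wc_None]. Qed.

Lemma Gc_at1 c i : Gc c (at_ i 1) = if (c == ord0) || (i == c) then W (at_ i 1) else 0.
Proof.
rewrite /Gc; case: ifP => hc; first by [].
by rewrite wc_at ?nn_pos // andbT.
Qed.

Lemma Gc_nil c : Gc c ^+ (nn c).+1 = 0.
Proof. by rewrite /Gc; case: eqP => [->|_]; [exact: W_nil | exact: wc_nil]. Qed.

Definition gb (u : T) : Alg := Gc (chainof u) ^+ lvl u.
Definition bb (u : T) : Alg := Y ^+ (n1 - lvl u) * gb u.

Lemma WG u : W * gb u = Gc (chainof u) ^+ (lvl u).+1.
Proof.
case: u => [t|]; rewrite /gb /Gc /=; last by rewrite ?eqxx expr0 mulr1 expr1.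
by case: eqP => _; [rewrite [RHS]exprS | rewrite W_wc].
Qed.

Lemma JR u : W * bb u =
  if (lvl u < nn (chainof u))%N then Y * bb (at_ (chainof u) (lvl u).+1) else 0.
Proof.
rewrite /bb mulrCA WG.
have hm := lvl_le u.
case: ltnP => h.
  have hv1 : chainof (at_ (chainof u) (lvl u).+1) = chainof u by rewrite chainof_at.
  have hv2 : lvl (at_ (chainof u) (lvl u).+1) = (lvl u).+1 by rewrite lvl_at.
  rewrite /gb hv1 hv2 mulrA -exprS subnSK //.
  exact: (leq_trans h (nn_le _)).
have -> : lvl u = nn (chainof u) by apply/eqP; rewrite eqn_leq hm h.
by rewrite Gc_nil mulr0.
Qed.

Lemma hform u : Y * bb u = Y ^+ (n1 - lvl u).+1 * Gc (chainof u) ^+ lvl u.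
Proof. by rewrite /bb /gb mulrA -exprS. Qed.


Lemma hb_van u i : vanish (Y * bb u) i (lvl u).
Proof.
rewrite hform.
have := vanish_mul (@vanish0 _ _ _ (Y ^+ (n1 - lvl u).+1) i) (VPow i (lvl u) (Gc_None (chainof u))).1.
by rewrite add0n.
Qed.

Lemma hb_lead u i : (lvl u <= nn i)%N ->
  (Y * bb u) (at_ i (lvl u)) = Y None ^+ (n1 - lvl u).+1 * Gc (chainof u) (at_ i 1) ^+ lvl u.
Proof.
move=> hl; rewrite hform.
have := VL2 (@vanish0 _ _ _ (Y ^+ (n1 - lvl u).+1) i) (VPow i (lvl u) (Gc_None (chainof u))).1.
rewrite !add0n => -> //; rewrite powY0 (VPow i (lvl u) (Gc_None (chainof u))).2 //.
Qed.

Hypothesis hW1 : forall i : I, W (at_ i 1) != 0.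

Lemma Gc_lead c : Gc c (at_ c 1) = W (at_ c 1).
Proof. by rewrite Gc_at1 eqxx orbT. Qed.

Lemma chainof_at0 d : (d <= n1)%N -> chainof (at_ (ord0 : I) d) = ord0.
Proof. by case: d => // d hd; rewrite chainof_at. Qed.


Lemma indep_step (al : T -> F) d :
  (forall i, (d <= nn i)%N -> \sum_u al u * (Y * bb u) (at_ i d) = 0) ->
  (forall u, (lvl u < d)%N -> al u = 0) ->
  forall u, lvl u = d -> (chainof u != ord0 -> al (at_ ord0 d) = 0) -> al u = 0.
Proof.
move=> hS hlow u hl hord.
have hdc : (d <= nn (chainof u))%N by rewrite -hl lvl_le.
have := hS _ hdc; rewrite (bigD1 u) //= big1 ?addr0.
  rewrite -hl hb_lead ?lvl_le // Gc_lead => /eqP; rewrite mulf_eq0 => /orP[/eqP //|].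
  by rewrite mulf_eq0 !expf_eq0 (negbTE hy0) (negbTE (hW1 _)) !andbF.
move=> u' hu'; case: (ltngtP (lvl (u' : T)) d) => h.
- by rewrite hlow ?mul0r.
- by rewrite (hb_van (u := (u' : T)) (i := chainof u) h hdc) mulr0.
have hd0 : (0 < d)%N.
  rewrite lt0n; apply: contra hu' => /eqP hd0.
  have e1 : (u' : T) = None by apply/eqP; rewrite -lvl0 h hd0.
  have e2 : u = None by apply/eqP; rewrite -lvl0 hl hd0.
  by rewrite e1 e2.
rewrite -h hb_lead ?h // Gc_at1.
case: (eqVneq (chainof u) (chainof u')) => [hcc|hcc].
  by move: hu'; rewrite -(at_cover u) -(at_cover u') hcc hl h eqxx.
case: (eqVneq (chainof u') ord0) => [hc0|hc0].
  rewrite -(at_cover u') hc0 h hord ?mul0r //.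
  by rewrite -hc0.
by rewrite /= expr0n eqn0Ngt hd0 /= !mulr0.
Qed.

Lemma indep (al : T -> F) : (forall u', \sum_u al u * (Y * bb u) u' = 0) -> forall u, al u = 0.
Proof.
move=> hS0.
have hS d i : (d <= nn i)%N -> \sum_u al u * (Y * bb u) (at_ i d) = 0 by move=> _; exact: hS0.
suff h : forall d u, (lvl u < d)%N -> al u = 0 by move=> u; apply: (h (lvl u).+1).
elim=> [//|d IH] u hu.
rewrite ltnS leq_eqVlt in hu; case/orP: hu => [/eqP hud|]; last exact: IH.
have hdn1 : (d <= n1)%N by rewrite -hud (leq_trans (lvl_le u)) // nn_le.
apply: (indep_step (hS d) IH hud) => hc.
apply: (indep_step (hS d) IH); first by rewrite lvl_at.
by rewrite chainof_at0 // eqxx.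
Qed.

Lemma sum_rank (G : 'I_#|{: T}| -> F) : \sum_k G k = \sum_u G (enum_rank u).
Proof. by rewrite (reindex enum_rank) //; apply: onW_bij; exact: enum_rank_bij. Qed.

Definition Hm : 'M[F]_#|{: T}| := \matrix_(k, l) (Y * bb (enum_val k)) (enum_val l).

Lemma Hm_unit : Hm \in unitmx.
Proof.
rewrite -row_free_unit -kermx_eq0; apply/eqP/row_matrixP => k; rewrite row0.
set v := row k (kermx Hm).
have hv : v *m Hm = 0 by rewrite -row_mul mulmx_ker row0.
clearbody v.
suff h : forall u, v 0 (enum_rank u) = 0.
  by apply/rowP => l; rewrite mxE -(enum_valK l) h.
apply: indep => u'.
transitivity ((v *m Hm) 0 (enum_rank u')); last by rewrite hv mxE.
by rewrite mxE sum_rank; apply: eq_bigr => u _; rewrite mxE !enum_rankK.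
Qed.

Definition Gm := invmx Hm.
Definition phi (u : T) : {ffun T -> F} := [ffun u' => Gm (enum_rank u') (enum_rank u)].
Definition pr (f g : {ffun T -> F}) := \sum_u f u * g u.

Lemma phi_h u v : pr (phi u) (Y * bb v) = (u == v)%:R.
Proof.
transitivity ((Hm *m Gm) (enum_rank v) (enum_rank u)).
  by rewrite mxE sum_rank; apply: eq_bigr => u' _; rewrite ffunE mxE !enum_rankK mulrC.
by rewrite /Gm mulmxV ?Hm_unit // mxE (inj_eq enum_rank_inj) eq_sym.
Qed.

Lemma prD f (a b : Alg) : pr f (a + b) = pr f a + pr f b.
Proof. by rewrite /pr -big_split; apply: eq_bigr => u _; rewrite ffunE mulrDr. Qed.

Lemma prLam f (g : Alg) : pr f (Lam * g) = lam * pr f g.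
Proof. by rewrite /pr mulr_sumr; apply: eq_bigr => u _; rewrite LamE mulrCA. Qed.

Lemma pr0 f : pr f (0 : Alg) = 0.
Proof. by rewrite /pr big1 // => u _; rewrite alg0E mulr0. Qed.

Lemma phi_X u v : pr (phi u) (X * bb v) =
  lam * (u == v)%:R + ((lvl v < nn (chainof v))%N && (u == at_ (chainof v) (lvl v).+1))%:R.
Proof.
rewrite -(subrK (Lam * Y) X) -/W mulrDl -mulrA prD prLam phi_h JR addrC.
by case: ifP => h; rewrite ?phi_h ?pr0.
Qed.

End Chain.


Section Glue.
Variables (F : fieldType) (n1 : nat) (rest : seq nat).
Local Notation ns := (n1 :: rest).
Local Notation T := (lvlT ns).
Local Notation G := (gidx ns).
Local Notation I := ('I_(size ns)).
Local Notation Alg := (Alg n1 rest F).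

Lemma cst_swap (p q r : G) : cst F q p r = - cst F p q r.
Proof.
case: p q r => [[] u] [[] v] [b w]; rewrite /cst /= ?oppr0 //.
  by case: (b && econd u v w); rewrite ?oppr0.
by case: (b && econd v u w); rewrite ?opprK ?oppr0.
Qed.

Lemma Aform_skew (x : {ffun G -> F}) : (Aform x)^T = - Aform x.
Proof.
apply/matrixP => k l; rewrite !mxE -sumrN; apply: eq_bigr => r _.
by rewrite cst_swap mulrN.
Qed.

Definition rowvec (V : {ffun G -> F}) : 'rV[F]_#|{: G}| := \row_k V (enum_val k).

Lemma sum_val (f : G -> F) : \sum_(k < #|{: G}|) f (enum_val k) = \sum_p f p.
Proof.
rewrite [RHS](reindex (fun k : 'I_#|{: G}| => enum_val k)) //.
by apply: onW_bij; exact: enum_val_bij.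
Qed.

Lemma bf_Aform x V1 V2 :
  bf (Aform x) (rowvec V1) (rowvec V2) = \sum_r x r * lie_br V1 V2 r.
Proof.
rewrite /bf mxE.
transitivity (\sum_(l < #|{: G}|) \sum_(k < #|{: G}|) V1 (enum_val k) * V2 (enum_val l) *
   \sum_r x r * cst F (enum_val k) (enum_val l) r).
  apply: eq_bigr => l _; rewrite !mxE mulr_suml; apply: eq_bigr => k _; rewrite !mxE.
  by rewrite mulrAC.
rewrite (sum_val (fun q => \sum_(k < #|{: G}|) V1 (enum_val k) * V2 q *
   \sum_r x r * cst F (enum_val k) q r)).
under eq_bigr => q _ do rewrite (sum_val (fun p => V1 p * V2 q * \sum_r x r * cst F p q r)).
rewrite exchange_big /=.
under [RHS]eq_bigr => r _ do rewrite ffunE mulr_sumr.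
rewrite [RHS]exchange_big /=; apply: eq_bigr => p _.
under [RHS]eq_bigr => r _ do rewrite mulr_sumr.
rewrite [RHS]exchange_big /=; apply: eq_bigr => q _.
by rewrite mulr_sumr; apply: eq_bigr => r _; ring.
Qed.

Definition vecE (phi : {ffun T -> F}) : {ffun G -> F} := [ffun p => if p.1 then phi p.2 else 0].
Definition vecF (b : {ffun T -> F}) : {ffun G -> F} := [ffun p => if p.1 then 0 else b p.2].

Lemma eE_vecE phi : eE (vecE phi) = phi. Proof. by apply/ffunP => u; rewrite !ffunE. Qed.
Lemma eF_vecE phi : eF (vecE phi) = 0. Proof. by apply/ffunP => u; rewrite !ffunE. Qed.
Lemma eE_vecF b : eE (vecF b) = 0. Proof. by apply/ffunP => u; rewrite !ffunE. Qed.
Lemma eF_vecF b : eF (vecF b) = b. Proof. by apply/ffunP => u; rewrite !ffunE. Qed.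

Lemma act_0r (b : {ffun T -> F}) w : act b 0 w = 0.
Proof. by rewrite ffunE big1 // => u _; rewrite big1 // => v _; rewrite ffunE !mul0r. Qed.

Lemma Om_lie (x V1 V2 : {ffun G -> F}) : \sum_r x r * lie_br V1 V2 r =
  \sum_w x (true, w) * (act (eF V2) (eE V1) w - act (eF V1) (eE V2) w).
Proof.
rewrite sum_gidx [X in _ + X]big1 ?addr0 => [|w _]; last by rewrite lieE mulr0.
by apply: eq_bigr => w _; rewrite lieE.
Qed.

Lemma pair_act (X b phi : {ffun T -> F}) :
  \sum_w X w * act b phi w = \sum_u phi u * ((b : Alg) * (X : Alg)) u.
Proof.
under eq_bigr => w _ do rewrite ffunE mulr_sumr.
rewrite exchange_big; apply: eq_bigr => u _; rewrite mul_val mulr_sumr.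
under eq_bigr => w _ do rewrite mulr_sumr.
rewrite exchange_big; apply: eq_bigr => v _; rewrite mulr_sumr; apply: eq_bigr => w _.
by ring.
Qed.

Lemma Om_EF (x : {ffun G -> F}) phi b : \sum_r x r * lie_br (vecE phi) (vecF b) r = pr phi ((eE x : Alg) * (b : Alg)).
Proof.
rewrite Om_lie eF_vecF eE_vecE eF_vecE eE_vecF.
under eq_bigr => w _ do rewrite act_0r subr0.
transitivity (\sum_w eE x w * act b phi w); first by apply: eq_bigr => w _; rewrite eEv.
by rewrite pair_act /pr mulrC.
Qed.

Lemma Om_FE (x : {ffun G -> F}) phi b : \sum_r x r * lie_br (vecF b) (vecE phi) r = - pr phi ((eE x : Alg) * (b : Alg)).
Proof.
rewrite -Om_EF !Om_lie !eF_vecF !eE_vecE !eF_vecE !eE_vecF -sumrN.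
by apply: eq_bigr => w _; rewrite act0 sub0r subr0 mulrN.
Qed.

Lemma Om_EE (x : {ffun G -> F}) phi psi : \sum_r x r * lie_br (vecE phi) (vecE psi) r = 0.
Proof.
rewrite Om_lie big1 // => w _; rewrite !eF_vecE !act0 subrr mulr0 //.
Qed.

Lemma Om_FF (x : {ffun G -> F}) (b c : {ffun T -> F}) : \sum_r x r * lie_br (vecF b) (vecF c) r = 0.
Proof.
rewrite Om_lie big1 // => w _; rewrite !eE_vecF !act_0r subrr mulr0 //.
Qed.

End Glue.



Section Table.
Variables (F : fieldType) (n1 : nat) (rest : seq nat).
Local Notation ns := (n1 :: rest).
Local Notation T := (lvlT ns).
Local Notation G := (gidx ns).
Local Notation I := ('I_(size ns)).
Local Notation Alg := (Alg n1 rest F).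
Hypothesis hsorted : sorted geq ns.
Hypothesis hpos : all (fun k => 0 < k)%N ns.

Definition dec j p : T := at_ (inord j : I) (nn (inord j : I) - p).
Definition ms := n1.+1 :: rest.
Definition valid j p := (j < size ns)%N && (p < nth 0%N ms j)%N.

Lemma nn_inord j : (j < size ns)%N -> nn (inord j : I) = nth 0%N ns j.
Proof. by move=> hj; rewrite /nn inordK. Qed.

Lemma nth_ms j : (j < size ns)%N -> nth 0%N ms j = (nn (inord j : I) + (j == 0%N))%N.
Proof. by case: j => [|j] hj; rewrite nn_inord //= ?addn1 ?addn0. Qed.

Lemma valid_le j p : valid j p -> (p <= nn (inord j : I))%N.
Proof.
case/andP => hj; rewrite nth_ms // => hp.
by case: (j == 0%N) hp; rewrite ?addn1 ?addn0 // => /ltnW.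
Qed.

Lemma dec_lvl j p : valid j p -> lvl (dec j p) = (nn (inord j : I) - p)%N.
Proof. by move=> hv; rewrite /dec lvl_at // leq_subr. Qed.

Lemma dec_chain j p : valid j p -> chainof (dec j p) = inord j.
Proof.
move=> hv; case: (posnP (nn (inord j : I) - p)) => h; last first.
  by rewrite /dec chainof_at // leq_subr.
rewrite /dec h at0 /=.
move: hv h; case/andP => hj; rewrite nth_ms //.
case: eqP => [-> _ _|_]; first by apply/val_inj; rewrite /= inordK.
by rewrite addn0 => hp /eqP; rewrite subn_eq0 leqNgt hp.
Qed.

Lemma dec_eq j p j' q : valid j p -> valid j' q ->
  (dec j p == dec j' q) = (j == j') && (p == q).
Proof.
move=> hv hv'; apply/eqP/andP => [e|[/eqP <- /eqP <-]] //.
have e1 := congr1 (@chainof n1 rest) e; have e2 := congr1 (@lvl ns) e.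
rewrite !dec_chain // in e1; rewrite !dec_lvl // in e2.
have hj : j = j'.
  have := congr1 val e1; rewrite /= !inordK //.
    by case/andP: hv'.
  by case/andP: hv.
subst j'; split => //.
by rewrite -(subKn (valid_le hv)) e2 subKn // valid_le.
Qed.

Variables (x a : {ffun G -> F}).
Local Notation X := (eE x : Alg).
Local Notation Y := (eE a : Alg).
Hypothesis hy0 : Y None != 0.
Hypothesis hW1 : forall i : I, W X Y (at_ i 1) != 0.

Lemma tabB j p j' q : valid j p -> valid j' q ->
  pr (phi X Y (dec j p)) (Y * bb X Y (dec j' q)) = if (j == j') && (p == q) then 1 else 0.
Proof. by move=> hv hv'; rewrite phi_h // dec_eq //; case: (_ && _). Qed.

Lemma tabA j p j' q : valid j p -> valid j' q ->
  pr (phi X Y (dec j p)) (X * bb X Y (dec j' q)) =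
  if j == j' then jv (lam X Y) p q else 0.
Proof.
move=> hv hv'; rewrite phi_X // dec_eq // dec_chain // dec_lvl //.
have hq := valid_le hv'.
have -> : ((nn (inord j' : I) - q < nn (inord j' : I))%N &&
           (dec j p == at_ (inord j') (nn (inord j' : I) - q).+1)) = (j == j') && (q == p.+1).
  case: (posnP q) => hq0.
    by rewrite hq0 subn0 ltnn /= andbF.
  have hv'' : valid j' q.-1.
    case/andP: hv' => hj' hq'; apply/andP; split => //.
    by rewrite (leq_trans _ hq') // ltnS leq_pred.
  have -> : at_ (inord j') (nn (inord j' : I) - q).+1 = dec j' q.-1.
    have e : ((nn (inord j' : I) - q).+1 = nn (inord j' : I) - q.-1)%N by lia.
    by rewrite /dec e.
  rewrite dec_eq // ltn_subrL hq0 nn_pos //=.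
  by congr (_ && _); apply/eqP/eqP => ?; lia.
rewrite /jv; case: (j == j') => /=; last by rewrite mulr0 add0r.
case: eqP => [->|hpq]; first by rewrite ?eqxx ltn_eqF // mulr1 addr0.
by rewrite mulr0 add0r; case: (q == p.+1).
Qed.

Lemma card_G : #|{: G}| = (2 * (sumn ns).+1)%N.
Proof.
rewrite card_prod card_bool card_option card_tagged.
have -> : [seq #|'I_(nn i)| | i <- enum I] = ns.
  rewrite (eq_map (fun i => card_ord (nn i))).
  have -> : [seq nn i | i <- enum I] = map (nth 0%N ns) (map val (enum I)).
    by rewrite -map_comp.
  by rewrite val_enum_ord -/(mkseq _ _) mkseq_nth.
by [].
Qed.

Lemma jk_dim_map (l : F) m : jk_dim (map (Jor (Some l)) m) = (2 * sumn m)%N.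
Proof. elim: m => [|k m IH] //=; rewrite IH; lia. Qed.

Lemma JK_xa : has_JK_form (Aform x) (Aform a) (map (Jor (Some (lam X Y))) ms).
Proof.
apply: (build_JK (VE := fun j p => rowvec (vecE (phi X Y (dec j p))))
                 (VF := fun j p => rowvec (vecF (bb X Y (dec j p))))).
- exact: Aform_skew.
- exact: Aform_skew.
- move=> j j' p q hj hj' hp hq.
  have hv : valid j p by apply/andP.
  have hv' : valid j' q by apply/andP.
  rewrite !bf_Aform !Om_EE !Om_FF !Om_EF; split => //; split.
    exact: tabA.
  exact: tabB.
- rewrite jk_dim_map card_G /=; lia.
Qed.

End Table.


Section Poly.
Variables (K : fieldType) (n1 : nat) (rest : seq nat).
Local Notation ns := (n1 :: rest).
Local Notation T := (lvlT ns).
Local Notation G := (gidx ns).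
Local Notation I := ('I_(size ns)).
Local Notation NN := #|{: G}|.

Lemma gptL (x a : {ffun G -> K}) p : gpt x a (lshift NN (enum_rank p)) = x p.
Proof.
rewrite /gpt; case: splitP => [k hk|k hk].
  have -> : k = enum_rank p by apply: val_inj; rewrite /= -hk.
  by rewrite enum_rankK.
by exfalso; move: hk (ltn_ord (enum_rank p)) => /= ->; rewrite ltnNge leq_addr.
Qed.

Lemma gptR (x a : {ffun G -> K}) p : gpt x a (rshift NN (enum_rank p)) = a p.
Proof.
rewrite /gpt; case: splitP => [k hk|k hk].
  by exfalso; move: hk (ltn_ord k) => /= <-; rewrite ltnNge leq_addr.
have -> : k = enum_rank p by apply/val_inj; move: hk => /= /eqP; rewrite eqn_add2l => /eqP.
by rewrite enum_rankK.
Qed.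

Definition xv (p : G) : {mpoly K[NN + NN]} := 'X_(lshift NN (enum_rank p)).
Definition av (p : G) : {mpoly K[NN + NN]} := 'X_(rshift NN (enum_rank p)).

Definition Ppoly : {mpoly K[NN + NN]} :=
  av (true, None) * \prod_(u : T | lvl u == 1%N)
     (xv (true, u) * av (true, None) - xv (true, None) * av (true, u)).

Lemma Ppoly_eval (x a : {ffun G -> K}) :
  meval (gpt x a) Ppoly = a (true, None) * \prod_(u : T | lvl u == 1%N)
     (x (true, u) * a (true, None) - x (true, None) * a (true, u)).
Proof.
rewrite /Ppoly mevalM (big_morph _ (mevalM _) (meval1 _)) /av /xv mevalXU gptR.
congr (_ * _); apply: eq_bigr => u _.
by rewrite mevalB !mevalM !mevalXU !gptL !gptR.
Qed.

End Poly.

Section Hyps.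
Variables (K : fieldType) (n1 : nat) (rest : seq nat).
Local Notation ns := (n1 :: rest).
Local Notation T := (lvlT ns).
Local Notation G := (gidx ns).
Local Notation I := ('I_(size ns)).
Local Notation Alg := (Alg n1 rest K).
Hypothesis hpos : all (fun k => 0 < k)%N ns.

Lemma hyps_from_U (x a : {ffun G -> K}) : meval (gpt x a) (Ppoly K n1 rest) != 0 ->
  (eE a : Alg) None != 0 /\ (forall i : I, W (eE x : Alg) (eE a : Alg) (at_ i 1) != 0).
Proof.
rewrite Ppoly_eval mulf_eq0 negb_or => /andP [ha0 hprod].
split; first by rewrite eEv.
move=> i.
have hu : lvl (at_ i 1) == 1%N by rewrite lvl_at // (nn_pos hpos).
move/prodf_neq0: hprod => /(_ (at_ i 1) hu).
rewrite algBE LamE /lam !eEv => hf.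
apply: contra hf => /eqP h.
have e : x (true, at_ i 1) * a (true, None) - x (true, None) * a (true, at_ i 1) =
         (x (true, at_ i 1) - x (true, None) / a (true, None) * a (true, at_ i 1)) * a (true, None).
  by field.
by rewrite e h mul0r.
Qed.

End Hyps.

Theorem theorem7 (R : realType) (ns : seq nat)
  (hs : (0 < size ns)%N)
  (hsorted : sorted geq ns)
  (hpos : all (fun k => 0 < k)%N ns) :
  ((forall X : {ffun gidx ns -> R[i]}, lie_br X X = 0) /\
   (forall X Y Z : {ffun gidx ns -> R[i]},
      lie_br X (lie_br Y Z) + lie_br Y (lie_br Z X) + lie_br Z (lie_br X Y) = 0))
  /\
  (exists U : ('I_(#|{: gidx ns}| + #|{: gidx ns}|) -> R[i]) -> Prop,
     [/\ zariski_open U,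
         exists z, U z &
         forall x a : {ffun gidx ns -> R[i]}, U (gpt x a) ->
           exists lam : option R[i],
             has_JK_form (Aform x) (Aform a) (target_tuple lam ns)]).
Proof.
case: ns hs hsorted hpos => [//|n1 rest] _ hsorted hpos.
split; first by split; [exact: lie_alt | exact: lie_jacobi].
exists (fun z => meval z (Ppoly R[i] n1 rest) != 0); split.
- exists (fun f => f == Ppoly R[i] n1 rest) => z; split => [h|[f [/eqP -> h]]] //.
  by exists (Ppoly R[i] n1 rest).
- exists (gpt [ffun _ => 1] [ffun p => (p == (true, None))%:R]).
  rewrite Ppoly_eval !ffunE eqxx mul1r.
  rewrite big1 ?oner_eq0 // => u hu.
  have hN : u != None by rewrite -lvl0 (eqP hu).
  by rewrite !ffunE xpair_eqE eqxx (negbTE hN) /= mulr1 mulr0 subr0.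
move=> x a hU.
have [hy0 hW1] := hyps_from_U hpos hU.
exists (Some (lam (eE x : Alg n1 rest R[i]) (eE a))).
exact: (JK_xa hsorted hpos hy0 hW1).
Qed.
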